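(* Let $n,d,d_k$ be positive integers, $X\in\mathbb{R}^{n\times d}$, $W_Q,W_K\in\mathbb{R}^{d\times d_k}$, $E\in\mathbb{R}^{n\times n}$, and let $P\in\mathbb{R}^{d\times d}$ be an orthogonal projector. Put $B=W_QW_K^\top$, $X_P=XP$, $G_Q=X^\top E X W_K/\sqrt{d_k}$, $G_K=X^\top E^\top X W_Q/\sqrt{d_k}$, and for $\eta_Q,\eta_K\ge0$ let $B^+=(W_Q-\eta_QG_Q)(W_K-\eta_KG_K)^\top$ and $\Delta Z_P=X_P P(B^+-B)P X_P^\top/\sqrt{d_k}$. Then for $S\in\{Q,K\}$, $$\|XW_SW_S^\top P\|_F\le\|X\|_F\|W_S\|_{\mathrm{op}}^2,$$ and consequently $$\|\Delta Z_P\|_F\le\frac{\|E\|_{\mathrm{op}}\|X\|_F}{d_k}\Big(\eta_Q\|W_K\|_{\mathrm{op}}^2+\eta_K\|W_Q\|_{\mathrm{op}}^2\Big)\|X_P\|_{\mathrm{op}}^2\|X_P\|_F+R_2,$$ where $R_2=\eta_Q\eta_K\|X_P\|_{\mathrm{op}}^2\|X_P\|_F^2\|E\|_{\mathrm{op}}^2\|XW_K\|_F\|XW_Q\|_F/d_k^{3/2}$.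
   Context: $\|\cdot\|_F$ is the Frobenius norm, $\|\cdot\|_{\mathrm{op}}$ the spectral norm; an orthogonal projector satisfies $P=P^\top=P^2$. *)

(* Defs.v *)
From mathcomp Require Import all_boot all_order all_algebra.
From mathcomp Require Import classical_sets reals.
Set Implicit Arguments. Unset Strict Implicit. Unset Printing Implicit Defensive.
Import Order.TTheory GRing.Theory Num.Theory.
Local Open Scope ring_scope.
Local Open Scope classical_set_scope.

Definition frob (R : realType) (m n : nat) (A : 'M[R]_(m, n)) : R :=
  Num.sqrt (\sum_(i < m) \sum_(j < n) A i j ^+ 2).

Definition vnorm (R : realType) (n : nat) (v : 'cV[R]_n) : R :=
  Num.sqrt (\sum_(i < n) v i 0 ^+ 2).

Definition opnorm (R : realType) (m n : nat) (A : 'M[R]_(m, n)) : R :=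
  sup [set vnorm (A *m v) | v in [set v : 'cV[R]_n | vnorm v <= 1]].

Definition orth_proj (R : realType) (d : nat) (P : 'M[R]_d) : Prop :=
  P = P^T /\ P *m P = P.

(* Main.v *)
Require Import Defs.
From mathcomp Require Import all_boot all_order all_algebra.
From mathcomp Require Import classical_sets reals.
From mathcomp Require Import ring lra.
Import Order.TTheory GRing.Theory Num.Theory.
Local Open Scope ring_scope.
Set Implicit Arguments. Unset Strict Implicit.

Section S.
Variable R : realType.

Lemma cs (I : finType) (f g : I -> R) :
  \sum_i f i * g i <= Num.sqrt (\sum_i f i ^+ 2) * Num.sqrt (\sum_i g i ^+ 2).
Proof.
set A := \sum_i f i ^+ 2; set B := \sum_i g i ^+ 2.
have A0 : 0 <= A by apply: sumr_ge0 => i _; exact: sqr_ge0.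
have B0 : 0 <= B by apply: sumr_ge0 => i _; exact: sqr_ge0.
set sa := Num.sqrt A; set sb := Num.sqrt B.
have hA : sa ^+ 2 = A by rewrite sqr_sqrtr.
have hB : sb ^+ 2 = B by rewrite sqr_sqrtr.
have sa0 : 0 <= sa by rewrite sqrtr_ge0.
have sb0 : 0 <= sb by rewrite sqrtr_ge0.
have key : forall i, 2 * (f i * g i) * (sa * sb) <= f i ^+ 2 * sb ^+ 2 + g i ^+ 2 * sa ^+ 2.
  move=> i; have := sqr_ge0 (f i * sb - g i * sa); nra.
have : \sum_i (2 * (f i * g i) * (sa * sb)) <= \sum_i (f i ^+ 2 * sb ^+ 2 + g i ^+ 2 * sa ^+ 2).
  by apply: ler_sum => i _; exact: key.
rewrite -!mulr_suml -mulr_sumr big_split /= -!mulr_suml -/A -/B hA hB.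
have [h0|pos] := eqVneq (sa * sb) 0.
  move=> _; rewrite h0.
  have fz : forall (h : I -> R), Num.sqrt (\sum_i h i ^+2) = 0 -> forall i, h i = 0.
    move=> h /eqP; rewrite sqrtr_eq0 => hle i.
    have hs : \sum_i h i ^+ 2 = 0.
      by apply/le_anti; rewrite hle /=; apply: sumr_ge0 => j _; exact: sqr_ge0.
    apply/eqP; rewrite -sqrf_eq0; apply/eqP.
    by apply: (psumr_eq0P _ hs) => // j _; exact: sqr_ge0.
  move/eqP: h0; rewrite mulf_eq0 => /orP[/eqP ha|/eqP hb].
    by rewrite big1 // => i _; rewrite (fz f ha i) mul0r.
  by rewrite big1 // => i _; rewrite (fz g hb i) mulr0.
move=> h.
have : 0 < sa * sb by rewrite lt_def pos mulr_ge0.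
move=> p.
rewrite -hA -hB in h.
nra.
Qed.

Definition nrm (I : finType) (f : I -> R) := Num.sqrt (\sum_i f i ^+ 2).

Lemma ss_ge0 (I : finType) (f : I -> R) : 0 <= \sum_i f i ^+ 2.
Proof. by apply: sumr_ge0 => i _; exact: sqr_ge0. Qed.

Lemma nrm_ge0 (I : finType) (f : I -> R) : 0 <= nrm f.
Proof. exact: sqrtr_ge0. Qed.

Lemma nrm_sq (I : finType) (f : I -> R) : nrm f ^+ 2 = \sum_i f i ^+ 2.
Proof. by rewrite sqr_sqrtr // ss_ge0. Qed.

Lemma sqrt_le_sq (x y : R) : 0 <= y -> x <= y ^+ 2 -> Num.sqrt x <= y.
Proof.
move=> y0 h; rewrite -(ger0_norm y0) -sqrtr_sqr; exact: ler_wsqrtr.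
Qed.

Lemma nrm_eq (I : finType) (f g : I -> R) : (forall i, f i = g i) -> nrm f = nrm g.
Proof. by move=> h; rewrite /nrm; congr Num.sqrt; apply: eq_bigr => i _; rewrite h. Qed.

Lemma nrm_tri (I : finType) (f g : I -> R) :
  nrm (fun i => f i + g i) <= nrm f + nrm g.
Proof.
apply: sqrt_le_sq; first by rewrite addr_ge0 ?nrm_ge0.
rewrite (eq_bigr (fun i => f i ^+ 2 + 2 * (f i * g i) + g i ^+ 2)); last first.
  by move=> i _; rewrite sqrrD; ring.
rewrite !big_split /= -mulr_sumr -!nrm_sq.
have := cs f g; rewrite -/(nrm f) -/(nrm g) => h.
nra.
Qed.

Lemma nrmZ (I : finType) (a : R) (f : I -> R) : nrm (fun i => a * f i) = `|a| * nrm f.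
Proof.
rewrite /nrm (eq_bigr (fun i => a ^+ 2 * f i ^+ 2)); last by move=> i _; rewrite exprMn.
by rewrite -mulr_sumr sqrtrM ?sqr_ge0 // sqrtr_sqr.
Qed.

Lemma cs_sq (I : finType) (f g : I -> R) :
  (\sum_i f i * g i) ^+ 2 <= (\sum_i f i ^+ 2) * (\sum_i g i ^+ 2).
Proof.
have h1 := cs f g.
have h2 := cs (fun i => - f i) g.
rewrite (eq_bigr (fun i => - (f i * g i))) in h2; last by move=> i _; rewrite mulNr.
rewrite (eq_bigr (fun i => f i ^+ 2) (fun i _ => sqrrN (f i))) sumrN in h2.
rewrite -(sqr_sqrtr (ss_ge0 f)) -(sqr_sqrtr (ss_ge0 g)).
have a0 := sqrtr_ge0 (\sum_i f i ^+ 2).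
have b0 := sqrtr_ge0 (\sum_i g i ^+ 2).
nra.
Qed.

Lemma frob_nrm m n (A : 'M[R]_(m, n)) : frob A = nrm (fun p : 'I_m * 'I_n => A p.1 p.2).
Proof. by rewrite /frob /nrm pair_big. Qed.

Lemma vnorm_nrm n (v : 'cV[R]_n) : vnorm v = nrm (fun i => v i 0).
Proof. by []. Qed.

Lemma frob_ge0 m n (A : 'M[R]_(m, n)) : 0 <= frob A.
Proof. exact: sqrtr_ge0. Qed.

Lemma vnorm_ge0 n (v : 'cV[R]_n) : 0 <= vnorm v.
Proof. exact: sqrtr_ge0. Qed.

Lemma frobD m n (A B : 'M[R]_(m, n)) : frob (A + B) <= frob A + frob B.
Proof.
rewrite !frob_nrm (nrm_eq (g := fun p => A p.1 p.2 + B p.1 p.2)); last by move=> p; rewrite mxE.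
exact: nrm_tri.
Qed.

Lemma frobZ m n (a : R) (A : 'M[R]_(m, n)) : frob (a *: A) = `|a| * frob A.
Proof.
rewrite !frob_nrm -nrmZ; apply: nrm_eq => p; by rewrite mxE.
Qed.

Lemma frobN m n (A : 'M[R]_(m, n)) : frob (- A) = frob A.
Proof. by rewrite -scaleN1r frobZ normrN normr1 mul1r. Qed.

Lemma frob_tr m n (A : 'M[R]_(m, n)) : frob A^T = frob A.
Proof.
rewrite /frob exchange_big /=; congr Num.sqrt; apply: eq_bigr => i _; apply: eq_bigr => j _.
by rewrite mxE.
Qed.

Lemma vnorm_sq n (v : 'cV[R]_n) : vnorm v ^+ 2 = \sum_i v i 0 ^+ 2.
Proof. exact: nrm_sq. Qed.

Lemma vnorm0 n : vnorm (0 : 'cV[R]_n) = 0.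
Proof. by rewrite /vnorm big1 ?sqrtr0 // => i _; rewrite mxE expr0n. Qed.

Lemma vnormZ n (a : R) (v : 'cV[R]_n) : vnorm (a *: v) = `|a| * vnorm v.
Proof. rewrite !vnorm_nrm -nrmZ; apply: nrm_eq => i; by rewrite mxE. Qed.

Lemma vnorm_mul m n (A : 'M[R]_(m, n)) (v : 'cV[R]_n) : vnorm (A *m v) <= frob A * vnorm v.
Proof.
apply: sqrt_le_sq; first by rewrite mulr_ge0 ?frob_ge0 ?vnorm_ge0.
rewrite exprMn vnorm_sq /frob sqr_sqrtr; last by apply: sumr_ge0 => i _; exact: ss_ge0.
rewrite mulr_suml; apply: ler_sum => i _; rewrite mxE.
exact: cs_sq.
Qed.

Lemma op_hub m n (A : 'M[R]_(m, n)) :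
  has_ubound [set vnorm (A *m v) | v in [set v : 'cV[R]_n | vnorm v <= 1]].
Proof.
exists (frob A) => x [v /= hv <-].
apply: (le_trans (vnorm_mul A v)).
by rewrite -{2}(mulr1 (frob A)) ler_wpM2l ?frob_ge0.
Qed.

Lemma op_ub m n (A : 'M[R]_(m, n)) (v : 'cV[R]_n) : vnorm v <= 1 -> vnorm (A *m v) <= opnorm A.
Proof. by move=> hv; apply: (ub_le_sup (op_hub A)); exists v. Qed.

Lemma op_ge0 m n (A : 'M[R]_(m, n)) : 0 <= opnorm A.
Proof.
apply: le_trans (op_ub A (v := 0) _); first exact: vnorm_ge0.
by rewrite vnorm0.
Qed.

Lemma op_le m n (A : 'M[R]_(m, n)) (c : R) :
  (forall v, vnorm v <= 1 -> vnorm (A *m v) <= c) -> opnorm A <= c.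
Proof.
move=> h; apply: ge_sup; first by exists (vnorm (A *m 0)), 0 => //=; rewrite vnorm0.
by move=> x [v /= hv <-]; exact: h.
Qed.

Lemma op_le_frob m n (A : 'M[R]_(m, n)) : opnorm A <= frob A.
Proof.
apply: op_le => v hv; apply: (le_trans (vnorm_mul A v)).
by rewrite -{2}(mulr1 (frob A)) ler_wpM2l ?frob_ge0.
Qed.

Lemma op_bound m n (A : 'M[R]_(m, n)) (v : 'cV[R]_n) : vnorm (A *m v) <= opnorm A * vnorm v.
Proof.
have [h0|hn] := eqVneq (vnorm v) 0.
  by apply: (le_trans (vnorm_mul A v)); rewrite h0 !mulr0.
have tpos : 0 < vnorm v by rewrite lt_def hn vnorm_ge0.
have := op_ub A (v := (vnorm v)^-1 *: v).
rewrite -scalemxAr !vnormZ ger0_norm ?invr_ge0 ?vnorm_ge0 // mulVf // lexx => /(_ isT) h.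
have ti : 0 < (vnorm v)^-1 by rewrite invr_gt0.
by rewrite -(ler_pM2l ti) mulrCA mulVf ?mulr1.
Qed.

Lemma op_le' m n (A : 'M[R]_(m, n)) (c : R) : 0 <= c ->
  (forall v, vnorm (A *m v) <= c * vnorm v) -> opnorm A <= c.
Proof.
move=> c0 h; apply: op_le => v hv; apply: (le_trans (h v)).
by rewrite -{2}(mulr1 c) ler_wpM2l.
Qed.

Lemma op_mul m n p (A : 'M[R]_(m, n)) (B : 'M[R]_(n, p)) : opnorm (A *m B) <= opnorm A * opnorm B.
Proof.
apply: op_le'; first by rewrite mulr_ge0 ?op_ge0.
move=> v; rewrite -mulmxA; apply: (le_trans (op_bound A _)).
by rewrite -mulrA ler_wpM2l ?op_ge0 // op_bound.
Qed.

Lemma sq_le (x a : R) : 0 <= x -> 0 <= a -> x ^+ 2 <= a * x -> x <= a.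
Proof. move=> x0 a0 h; nra. Qed.

Lemma dot_tr m n (A : 'M[R]_(m, n)) (u : 'cV[R]_m) (w : 'cV[R]_n) :
  \sum_i (A^T *m u) i 0 * w i 0 = \sum_k u k 0 * (A *m w) k 0.
Proof.
rewrite (eq_bigr (fun i => \sum_k A k i * u k 0 * w i 0)); last first.
  by move=> i _; rewrite !mxE mulr_suml; apply: eq_bigr => k _; rewrite mxE.
rewrite exchange_big /=; apply: eq_bigr => k _; rewrite mxE mulr_sumr; apply: eq_bigr => i _.
ring.
Qed.

Lemma op_tr m n (A : 'M[R]_(m, n)) : opnorm A^T <= opnorm A.
Proof.
apply: op_le'; first exact: op_ge0.
move=> u; apply: sq_le; rewrite ?mulr_ge0 ?op_ge0 ?vnorm_ge0 //.
rewrite vnorm_sq (eq_bigr (fun i => (A^T *m u) i 0 * (A^T *m u) i 0)); last by move=> i _; rewrite expr2.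
rewrite dot_tr; apply: (le_trans (cs _ _)); rewrite -/(vnorm u) -/(vnorm (A *m (A^T *m u))).
have h := op_bound A (A^T *m u).
apply: (le_trans (ler_wpM2l (vnorm_ge0 u) h)).
by rewrite mulrA [vnorm u * _]mulrC.
Qed.

Lemma op_proj d (P : 'M[R]_d) : orth_proj P -> opnorm P <= 1.
Proof.
case=> h1 h2; apply: op_le'; first exact: ler01.
move=> v; rewrite mul1r; apply: sq_le; rewrite ?vnorm_ge0 //.
rewrite vnorm_sq (eq_bigr (fun i => (P^T *m v) i 0 * (P *m v) i 0)); last by move=> i _; rewrite expr2 -h1.
rewrite dot_tr mulmxA h2; apply: (le_trans (cs _ _)).
by rewrite -/(vnorm v) -/(vnorm (P *m v)).
Qed.

Lemma frob_mul_l m n p (A : 'M[R]_(m, n)) (B : 'M[R]_(n, p)) : frob (A *m B) <= opnorm A * frob B.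
Proof.
apply: sqrt_le_sq; first by rewrite mulr_ge0 ?op_ge0 ?frob_ge0.
rewrite exprMn /frob sqr_sqrtr; last by apply: sumr_ge0 => i _; exact: ss_ge0.
rewrite exchange_big [X in _ <= _ * X]exchange_big /= mulr_sumr; apply: ler_sum => j _.
have := op_bound A (col j B).
have e1 : vnorm (A *m col j B) ^+ 2 = \sum_i (A *m B) i j ^+ 2.
  rewrite vnorm_sq; apply: eq_bigr => i _; rewrite !mxE; congr (_ ^+ 2).
  by apply: eq_bigr => k _; rewrite mxE.
have e2 : vnorm (col j B) ^+ 2 = \sum_i B i j ^+ 2.
  by rewrite vnorm_sq; apply: eq_bigr => i _; rewrite mxE.
rewrite -e1 -e2 => h.
rewrite -exprMn; apply: lerXn2r => //; rewrite ?nnegrE ?vnorm_ge0 ?mulr_ge0 ?op_ge0 ?vnorm_ge0 //.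
Qed.

Lemma frob_mul_r m n p (A : 'M[R]_(m, n)) (B : 'M[R]_(n, p)) : frob (A *m B) <= frob A * opnorm B.
Proof.
rewrite -frob_tr trmx_mul; apply: (le_trans (frob_mul_l _ _)).
rewrite frob_tr mulrC ler_wpM2l ?frob_ge0 //; exact: op_tr.
Qed.

Lemma frob_mul m n p (A : 'M[R]_(m, n)) (B : 'M[R]_(n, p)) : frob (A *m B) <= frob A * frob B.
Proof.
apply: (le_trans (frob_mul_l _ _)); rewrite ler_wpM2r ?frob_ge0 //; exact: op_le_frob.
Qed.

Lemma zm (M : zmodType) (x y z w : M) : x - y - (z - w) - x = w - y - z.
Proof. by rewrite opprB addrAC [x - y - x]addrAC subrr add0r addrA [- y + w]addrC. Qed.

Lemma bp_id n d dk (X : 'M[R]_(n, d)) (WQ WK : 'M[R]_(d, dk)) (E : 'M[R]_n) (c eQ eK : R) :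
  let G1 := X^T *m E *m X *m WK in
  let G2 := X^T *m E^T *m X *m WQ in
  (WQ - eQ *: (c *: G1)) *m (WK - eK *: (c *: G2))^T - WQ *m WK^T =
  (eQ * eK * c * c) *: (G1 *m G2^T) - (eK * c) *: (WQ *m G2^T) - (eQ * c) *: (G1 *m WK^T).
Proof.
move=> G1 G2.
rewrite !scalerA [(WK - _)^T]linearB /= [(_ *: G2)^T]linearZ /= mulmxBl !mulmxBr -!scalemxAl -!scalemxAr scalerA.
rewrite [eQ * c * (eK * c)](_ : _ = eQ * eK * c * c); last by ring.
exact: zm.
Qed.

Lemma opM_le m n p (A : 'M[R]_(m, n)) (B : 'M[R]_(n, p)) a b :
  opnorm A <= a -> opnorm B <= b -> opnorm (A *m B) <= a * b.
Proof.
move=> ha hb; apply: (le_trans (op_mul A B)); exact: ler_pM (op_ge0 _) (op_ge0 _) ha hb.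
Qed.

Lemma chain3_le m n p q (A : 'M[R]_(m, n)) (F : 'M[R]_(n, p)) (C : 'M[R]_(p, q)) a f c :
  opnorm A <= a -> frob F <= f -> opnorm C <= c -> frob (A *m F *m C) <= a * f * c.
Proof.
move=> ha hf hc; apply: (le_trans (frob_mul_r _ _)).
apply: ler_pM (frob_ge0 _) (op_ge0 _) _ hc.
apply: (le_trans (frob_mul_l _ _)); exact: ler_pM (op_ge0 _) (frob_ge0 _) ha hf.
Qed.

Lemma frobB m n (A B : 'M[R]_(m, n)) : frob (A - B) <= frob A + frob B.
Proof. by rewrite -(frobN B); exact: frobD. Qed.
End S.

Theorem corollary1 (R : realType) (n d dk : nat)
  (hn : (0 < n)%N) (hd : (0 < d)%N) (hdk : (0 < dk)%N)
  (X : 'M[R]_(n, d)) (WQ WK : 'M[R]_(d, dk)) (E : 'M[R]_n) (P : 'M[R]_d)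
  (hP : orth_proj P) (etaQ etaK : R) (heQ : 0 <= etaQ) (heK : 0 <= etaK) :
  let sdk := Num.sqrt (dk%:R : R) in
  let B := WQ *m WK^T in
  let XP := X *m P in
  let GQ := sdk^-1 *: (X^T *m E *m X *m WK) in
  let GK := sdk^-1 *: (X^T *m E^T *m X *m WQ) in
  let Bp := (WQ - etaQ *: GQ) *m (WK - etaK *: GK)^T in
  let DZ := sdk^-1 *: (XP *m P *m (Bp - B) *m P *m XP^T) in
  let R2 := etaQ * etaK * opnorm XP ^+ 2 * frob XP ^+ 2 * opnorm E ^+ 2
            * frob (X *m WK) * frob (X *m WQ) / (dk%:R * sdk) in
  [/\ frob (X *m WQ *m WQ^T *m P) <= frob X * opnorm WQ ^+ 2,
      frob (X *m WK *m WK^T *m P) <= frob X * opnorm WK ^+ 2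
    & frob DZ <= opnorm E * frob X / dk%:R
                 * (etaQ * opnorm WK ^+ 2 + etaK * opnorm WQ ^+ 2)
                 * opnorm XP ^+ 2 * frob XP + R2].
Proof.
move=> sdk B XP GQ GK Bp DZ R2.
case: (hP) => hP1 hP2.
have sdk0 : 0 < sdk by rewrite sqrtr_gt0 ltr0n.
have part1 : forall W : 'M[R]_(d, dk), frob (X *m W *m W^T *m P) <= frob X * opnorm W ^+ 2.
  move=> W.
  rewrite -frob_tr !trmx_mul trmxK -hP1.
  have a1 := frob_mul_l P (W *m (W^T *m X^T)).
  have a2 := frob_mul_l W (W^T *m X^T).
  have a3 := frob_mul_l W^T X^T.
  have a4 := op_tr W.
  have a5 := op_proj hP.
  rewrite frob_tr in a3.
  apply: (le_trans a1); apply: (le_trans (ler_pM (op_ge0 _) (frob_ge0 _) a5 a2)); rewrite mul1r.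
  apply: (le_trans (ler_wpM2l (op_ge0 W) a3)).
  apply: (le_trans (ler_wpM2l (op_ge0 W) (ler_wpM2r (frob_ge0 X) a4))).
  by have -> : frob X * opnorm W ^+ 2 = opnorm W * (opnorm W * frob X) by ring.
split; [exact: part1 | exact: part1 |].
set c := sdk^-1.
have c0 : 0 < c by rewrite invr_gt0.
set G1 := X^T *m E *m X *m WK.
set G2 := X^T *m E^T *m X *m WQ.
set T1 := XP *m P *m (WQ *m G2^T) *m P *m XP^T.
set T2 := XP *m P *m (G1 *m WK^T) *m P *m XP^T.
set T3 := XP *m P *m (G1 *m G2^T) *m P *m XP^T.
have hDZ : DZ = c *: ((etaQ * etaK * c * c) *: T3 - (etaK * c) *: T1 - (etaQ * c) *: T2).
  rewrite /DZ /Bp /B /GQ /GK -/c -/G1 -/G2 bp_id.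
  by rewrite !mulmxBr !mulmxBl -!scalemxAr -!scalemxAl.
have hXP : XP = X *m P by [].
clearbody XP.
have eq1 : T1 = (XP *m P *m WQ *m WQ^T) *m X^T *m (E *m XP *m XP^T).
  by rewrite /T1 /G2 hXP !trmx_mul !trmxK !mulmxA.
have eq2 : T2 = (XP *m XP^T *m E) *m X *m (WK *m WK^T *m P *m XP^T).
  by rewrite /T2 /G1 hXP !trmx_mul ?trmxK -hP1 !mulmxA.
have eq3 : T3 = (XP *m XP^T *m E) *m ((X *m WK) *m (X *m WQ)^T) *m (E *m XP *m XP^T).
  by rewrite /T3 /G1 /G2 hXP !trmx_mul !trmxK -hP1 !mulmxA.
set x := opnorm XP; set xf := frob XP; set q := opnorm WQ; set k := opnorm WK.
set e := opnorm E; set f := frob X; set fK := frob (X *m WK); set fQ := frob (X *m WQ).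
have x0 : 0 <= x by apply: op_ge0.
have xf0 : 0 <= xf by apply: frob_ge0.
have q0 : 0 <= q by apply: op_ge0.
have k0 : 0 <= k by apply: op_ge0.
have e0 : 0 <= e by apply: op_ge0.
have f0 : 0 <= f by apply: frob_ge0.
have fK0 : 0 <= fK by apply: frob_ge0.
have fQ0 : 0 <= fQ by apply: frob_ge0.
have hx : x <= xf by apply: op_le_frob.
have b1 : frob T1 <= x ^+ 2 * xf * q ^+ 2 * f * e.
  rewrite eq1; apply: (le_trans (chain3_le (a := x * 1 * q * q) (f := f) (c := e * x * x) _ _ _)).
  - exact: opM_le (opM_le (opM_le (lexx _) (op_proj hP)) (lexx _)) (op_tr _).
  - by rewrite frob_tr.
  - exact: opM_le (opM_le (lexx _) (lexx _)) (op_tr _).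
  have -> : x * 1 * q * q * f * (e * x * x) = (x ^+ 2 * q ^+ 2 * f * e) * x by ring.
  have -> : x ^+ 2 * xf * q ^+ 2 * f * e = (x ^+ 2 * q ^+ 2 * f * e) * xf by ring.
  by apply: ler_wpM2l => //; rewrite !mulr_ge0 ?exprn_ge0.
have b2 : frob T2 <= x ^+ 2 * xf * k ^+ 2 * f * e.
  rewrite eq2; apply: (le_trans (chain3_le (a := x * x * e) (f := f) (c := k * k * 1 * x) _ _ _)).
  - exact: opM_le (opM_le (lexx _) (op_tr _)) (lexx _).
  - exact: lexx.
  - exact: opM_le (opM_le (opM_le (lexx _) (op_tr _)) (op_proj hP)) (op_tr _).
  have -> : x * x * e * f * (k * k * 1 * x) = (x ^+ 2 * k ^+ 2 * f * e) * x by ring.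
  have -> : x ^+ 2 * xf * k ^+ 2 * f * e = (x ^+ 2 * k ^+ 2 * f * e) * xf by ring.
  by apply: ler_wpM2l => //; rewrite !mulr_ge0 ?exprn_ge0.
have b3 : frob T3 <= x ^+ 2 * xf ^+ 2 * e ^+ 2 * fK * fQ.
  rewrite eq3; apply: (le_trans (chain3_le (a := x * x * e) (f := fK * fQ) (c := e * x * x) _ _ _)).
  - exact: opM_le (opM_le (lexx _) (op_tr _)) (lexx _).
  - by apply: (le_trans (frob_mul _ _)); rewrite frob_tr.
  - exact: opM_le (opM_le (lexx _) (lexx _)) (op_tr _).
  have -> : x * x * e * (fK * fQ) * (e * x * x) = (x ^+ 2 * e ^+ 2 * fK * fQ) * (x * x) by ring.
  have -> : x ^+ 2 * xf ^+ 2 * e ^+ 2 * fK * fQ = (x ^+ 2 * e ^+ 2 * fK * fQ) * (xf * xf) by ring.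
  by apply: ler_wpM2l; [rewrite !mulr_ge0 ?exprn_ge0 | exact: ler_pM].
have a1 : 0 <= etaK * c by rewrite mulr_ge0 // ltW.
have a2 : 0 <= etaQ * c by rewrite mulr_ge0 // ltW.
have a3 : 0 <= etaQ * etaK * c * c by rewrite !mulr_ge0 // ltW.
rewrite hDZ frobZ (ger0_norm (ltW c0)).
have hsum : frob ((etaQ * etaK * c * c) *: T3 - (etaK * c) *: T1 - (etaQ * c) *: T2)
   <= (etaQ * etaK * c * c) * (x ^+ 2 * xf ^+ 2 * e ^+ 2 * fK * fQ)
      + (etaK * c) * (x ^+ 2 * xf * q ^+ 2 * f * e) + (etaQ * c) * (x ^+ 2 * xf * k ^+ 2 * f * e).
  apply: (le_trans (frobB _ _)); apply: lerD; last by rewrite frobZ ger0_norm // ler_wpM2l.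
  apply: (le_trans (frobB _ _)); rewrite !frobZ !ger0_norm //.
  by apply: lerD; rewrite ler_wpM2l.
apply: (le_trans (ler_wpM2l (ltW c0) hsum)).
have hcc : (dk%:R : R)^-1 = c * c.
  by rewrite /c -invfM -expr2 /sdk sqr_sqrtr ?ler0n.
rewrite /R2 -/x -/xf -/e -/fK -/fQ invfM hcc -/c.
by rewrite le_eqVlt; apply/orP; left; apply/eqP; ring.
Qed.
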